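(* Let $G$ be a transitively closed directed acyclic graph on $[n]$ and let $H\subseteq G$ be path consistent and admissible with respect to $G$. Then there exist a partition $\mathcal P$ of $[n]$ and, for each $P\in\mathcal P$, disjoint subsets $L_P,R_P\subseteq P$ such that $E(H)=\bigcup_{P\in\mathcal P}E\big((G|_P)_{L_P,R_P}\big)$.
   Context: Conventions: $G$ is a directed acyclic graph with vertex set $[n]$, every edge $(i,j)\in E(G)$ satisfying $i<j$. A subgraph $H\subseteq G$ means $V(H)=[n]$ and $E(H)\subseteq E(G)$; $H^{un}$ is the underlying undirected graph. $G$ is transitively closed if $(i,j),(j,k)\in E(G)$ implies $(i,k)\in E(G)$. $G|_P$ is the induced subgraph on $P$. For disjoint $L,R$, $G_{L,R}$ is the subgraph with edges $\{(i,j)\in E(G):i\in L,j\in R\}$. Path consistency: for an undirected path $p$ in $H^{un}$ from $u$ to $v$, let $\delta(p)$ be the number of edges traversed (from $u$ to $v$) along their orientation minus the number traversed against it. $H$ is path consistent if any two undirected paths in $H^{un}$ with the same endpoints $u,v$ have equal $\delta$; this common value is $\ell_{uv}$. Within a connected component $C$ of $H^{un}$, a weight source is $u_*\in C$ with $\ell_{u_*v_*}=\max_{u,v\in C}\ell_{uv}$ for some $v_*\in C$. The weight function is $w(i)=\ell_{u_*i}$, $u_*$ any weight source in the component of $i$. $H_{comp}$: directed multigraph whose vertices are the connected components of $H^{un}$, with one edge from the component of $u$ to that of $v$ for each $(u,v)\in E(G)\setminus E(H)$; for such an edge $e$, $\mathsf{wd}(e)=w(u)-w(v)$. $H$ is admissible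 with respect to $G$ if for every directed cycle $\mathcal C$ of $H_{comp}$ (including loops), $\sum_{e\in\mathcal C}\mathsf{wd}(e)>-|\mathcal C|$. *)

(* Defs.v *)
From HB Require Import structures.
From mathcomp Require Import all_boot all_order all_algebra.
Set Implicit Arguments. Unset Strict Implicit. Unset Printing Implicit Defensive.
Import Order.TTheory GRing.Theory Num.Theory.

(* Vertices of [n] are represented by 'I_n; a (sub)graph on [n] is its edge
   set, a set of ordered pairs (i,j). *)
Notation edgeset n := {set 'I_n * 'I_n}.

Section Defs.
Variable n : nat.
Implicit Types (G H : edgeset n) (u v : 'I_n).

Definition dag_on G : Prop := forall e, e \in G -> (e.1 < e.2)%N.

Definition trans_closed G : Prop :=
  forall i j k, (i, j) \in G -> (j, k) \in G -> (i, k) \in G.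

Definition Hun H : rel 'I_n := fun a b => ((a, b) \in H) || ((b, a) \in H).

Definition conn H : rel 'I_n := connect (Hun H).

Definition upath H u (p : seq 'I_n) : bool := path (Hun H) u p && uniq (u :: p).

Fixpoint delta H u (p : seq 'I_n) : int :=
  match p with
  | [::] => 0
  | v :: p' => ((if (u, v) \in H then 1 else if (v, u) \in H then -1 else 0)
                + delta H v p')%R
  end.

Definition path_consistent H : Prop :=
  forall u p q, upath H u p -> upath H u q -> last u p = last u q ->
    delta H u p = delta H u q.

(* ellR H u v k : some path from u to v in H^un has delta = k
   (under path consistency, k = ell_{uv}) *)
Definition ellR H u v (k : int) : Prop :=
  exists p, [/\ upath H u p, last u p = v & delta H u p = k].

Definition weight_source H (us : 'I_n) : Prop :=
  exists vs ks, ellR H us vs ks /\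
    forall u v k, conn H us u -> conn H us v -> ellR H u v k -> (k <= ks)%R.

Definition weight_fun H (w : 'I_n -> int) : Prop :=
  forall i, exists us, weight_source H us /\ ellR H us i (w i).

(* directed cycles of H_comp (including loops): nonempty sequences of edges
   of G \ H, the head component of each edge being the tail component of
   the next (cyclically), visiting pairwise distinct components. *)
Definition comp_cycle G H (es : seq ('I_n * 'I_n)) : bool :=
  [&& es != [::], all (fun e => e \in G :\: H) es,
      cycle (fun e f => conn H e.2 f.1) es &
      pairwise (fun e f => ~~ conn H e.1 f.1) es].

Definition admissible G H : Prop :=
  exists w, weight_fun H w /\
    forall es, comp_cycle G H es ->
      (- (size es)%:Z < \sum_(e <- es) (w e.1 - w e.2))%R.

Definition block_edges G (P L R : {set 'I_n}) : {set 'I_n * 'I_n} :=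
  [set e in G | [&& e.1 \in P, e.2 \in P, e.1 \in L & e.2 \in R]].

End Defs.

(* Main.v *)
Require Import Defs.
From HB Require Import structures.
From mathcomp Require Import all_boot all_order all_algebra.
From mathcomp Require Import zify.
Set Implicit Arguments. Unset Strict Implicit. Unset Printing Implicit Defensive.
Import Order.TTheory GRing.Theory Num.Theory.

Section Aux.
Variables (n : nat) (G H : {set 'I_n * 'I_n}).
Hypotheses (dagG : dag_on G) (HG : H \subset G) (pcH : path_consistent H).
Local Open Scope ring_scope.

Lemma noloop a : (a, a) \notin H.
Proof. by apply/negP=> /(subsetP HG) /dagG /=; rewrite ltnn. Qed.

Lemma asym a b : (a, b) \in H -> (b, a) \notin H.
Proof.
move=> /(subsetP HG) /dagG /= ab; apply/negP=> /(subsetP HG) /dagG /= ba.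
by move: (ltn_trans ab ba); rewrite ltnn.
Qed.

Lemma Hun_sym : symmetric (Hun H).
Proof. by move=> a b; rewrite /Hun orbC. Qed.

Lemma conn_sym a b : conn H a b = conn H b a.
Proof. exact: (sym_connect_sym Hun_sym). Qed.

Definition step u v : int :=
  if (u, v) \in H then 1 else if (v, u) \in H then -1 else 0.

Lemma delta_cons u v p : delta H u (v :: p) = step u v + delta H v p.
Proof. by []. Qed.

Lemma delta_cat u p1 p2 :
  delta H u (p1 ++ p2) = delta H u p1 + delta H (last u p1) p2.
Proof.
elim: p1 u => [|v p IH] u /=; first by rewrite add0r.
by rewrite IH addrA.
Qed.

Lemma delta_rcons u p v : delta H u (rcons p v) = delta H u p + step (last u p) v.
Proof. by rewrite -cats1 delta_cat /= addr0. Qed.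

Lemma step_anti u v : Hun H u v -> step v u = - step u v.
Proof.
rewrite /step /Hun => /orP[] uv.
  by rewrite (negbTE (asym uv)) uv.
by rewrite uv (negbTE (asym uv)).
Qed.

Lemma Hun_neq u v : Hun H u v -> u != v.
Proof.
apply: contraTneq => ->; rewrite /Hun.
by rewrite (negbTE (noloop v)).
Qed.

Lemma walk_simple u p : path (Hun H) u p ->
  exists q, [/\ upath H u q, last u q = last u p & delta H u q = delta H u p].
Proof.
elim/last_ind: p => [|p v IH].
  by move=> _; exists [::]; split.
rewrite rcons_path => /andP[/IH [q [Uq Lq Dq]] e].
rewrite last_rcons delta_rcons -Lq -Dq.
move: Uq; rewrite /upath => /andP[Pq Uq].
rewrite -Lq in e; clear Lq Dq.
have [vin|vnin] := boolP (v \in u :: q).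
  case/splitPl: q / vin Pq Uq e => q1 q2 lq1 Pq Uq e.
  move: Pq; rewrite cat_path => /andP[P1 P2].
  have : uniq ((u :: q1) ++ q2) by exact: Uq.
  rewrite cat_uniq => /and3P[U1 nh U2].
  exists q1; split => //; first by rewrite /upath P1 U1.
  rewrite lq1 in P2.
  have yv : last u (q1 ++ q2) = last v q2 by rewrite last_cat lq1.
  move: e; rewrite yv => e.
  have U2' : upath H v q2.
    rewrite /upath P2 /= U2 andbT; apply: contra nh => vq2.
    by apply/hasP; exists v => //; rewrite -lq1 mem_last.
  have e' : Hun H v (last v q2) by move: e; rewrite /Hun orbC.
  have U1' : upath H v [:: last v q2].
    by rewrite /upath /= e' andbT inE eq_sym (Hun_neq e).
  have := pcH U2' U1' => /(_ erefl) D2.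
  rewrite delta_cat lq1 D2 /= addr0 step_anti // addrK //.
exists (rcons q v); split.
- rewrite /upath rcons_path Pq e -rcons_cons rcons_uniq vnin Uq //.
- by rewrite last_rcons.
- by rewrite delta_rcons.
Qed.

Lemma walk_rev u p : path (Hun H) u p ->
  exists r, [/\ path (Hun H) (last u p) r, last (last u p) r = u &
               delta H (last u p) r = - delta H u p].
Proof.
elim: p u => [|v p IH] u /=.
  by move=> _; exists [::]; split => //; rewrite oppr0.
case/andP=> e /IH [r [Pr Lr Dr]].
exists (rcons r u); split.
- by rewrite rcons_path Pr Lr Hun_sym.
- by rewrite last_rcons.
- by rewrite delta_rcons Dr Lr step_anti // -/step opprD addrC.
Qed.

Lemma ellR_uniq u v k1 k2 : ellR H u v k1 -> ellR H u v k2 -> k1 = k2.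
Proof.
move=> [p [Up Lp Dp]] [q [Uq Lq Dq]]; rewrite -Dp -Dq; apply: pcH => //.
by rewrite Lp Lq.
Qed.

Lemma ellR_walk u p : path (Hun H) u p -> ellR H u (last u p) (delta H u p).
Proof. by move=> /walk_simple [q [Uq Lq Dq]]; exists q. Qed.

Lemma ellR_rev u v k : ellR H u v k -> ellR H v u (- k).
Proof.
move=> [p [/andP[Pp _] <- <-]].
have [r [Pr Lr Dr]] := walk_rev Pp.
by rewrite -Dr -{2}Lr; apply: ellR_walk.
Qed.

Lemma ellR_comp a b c k1 k2 : ellR H a b k1 -> ellR H b c k2 -> ellR H a c (k1 + k2).
Proof.
move=> [p [/andP[Pp _] Lp <-]] [q [/andP[Pq _] <- <-]].
have : path (Hun H) a (p ++ q) by rewrite cat_path Pp Lp.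
move/ellR_walk; by rewrite last_cat delta_cat Lp.
Qed.

Lemma ellR_conn u v k : ellR H u v k -> conn H u v.
Proof. by move=> [p [/andP[Pp _] <- _]]; apply/connectP; exists p. Qed.

Lemma conn_ellR u v : conn H u v -> exists k, ellR H u v k.
Proof. by move/connectP=> [p Pp ->]; exists (delta H u p); apply: ellR_walk. Qed.

Lemma ellR_edge a b : (a, b) \in H -> ellR H a b 1.
Proof.
move=> ab; have e : Hun H a b by rewrite /Hun ab.
exists [:: b]; split => //.
  by rewrite /upath /= e inE (Hun_neq e).
by rewrite /= ab addr0.
Qed.

Variable w : 'I_n -> int.
Hypothesis wf : weight_fun H w.

Lemma ws_same us us' : weight_source H us -> weight_source H us' ->
  conn H us us' -> ellR H us' us 0.
Proof.
move=> [vs [ks [E B]]] [vs' [ks' [E' B']]] c.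
have c' : conn H us' us by rewrite conn_sym.
have cv : conn H us vs := ellR_conn E.
have cv' : conn H us' vs' := ellR_conn E'.
have [k0 K0] := conn_ellR c'.
have h1 : ks <= ks' by apply: (B' _ _ _ c' (connect_trans c' cv) E).
have h2 : ks' <= ks by apply: (B _ _ _ c (connect_trans c cv') E').
have h3 : k0 + ks <= ks' by apply: (B' _ _ _ (connect0 _ _) (connect_trans c' cv) (ellR_comp K0 E)).
have h4 : - k0 + ks' <= ks by apply: (B _ _ _ (connect0 _ _) (connect_trans c cv') (ellR_comp (ellR_rev K0) E')).
have -> : 0 = k0 by lia.
exact: K0.
Qed.

Lemma wstep x y k : ellR H x y k -> w y = w x + k.
Proof.
move=> Exy.
have [us [Wus Ex]] := wf x; have [us' [Wus' Ey]] := wf y.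
have c : conn H us us'.
  apply: connect_trans (ellR_conn (ellR_comp Ex Exy)) _.
  by move: (ellR_conn Ey); rewrite conn_sym.
have := ellR_comp (ellR_comp (ws_same Wus Wus' c) Ex) Exy.
by move/(ellR_uniq Ey) => ->; rewrite add0r.
Qed.

Lemma w_ge0 x : 0 <= w x.
Proof.
have [us [[vs [ks [E B]]] Ex]] := wf x.
have := B _ _ _ (ellR_conn Ex) (ellR_conn E) (ellR_comp (ellR_rev Ex) E).
lia.
Qed.

Lemma w_edge a b : (a, b) \in H -> w b = w a + 1.
Proof. by move/ellR_edge/wstep. Qed.

End Aux.

Theorem mainTheorem15 (n : nat) (G H : {set 'I_n * 'I_n}) :
  dag_on G -> trans_closed G -> H \subset G ->
  path_consistent H -> admissible G H ->
  exists (Pt : {set {set 'I_n}}) (L R : {set 'I_n} -> {set 'I_n}),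
    [/\ partition Pt [set: 'I_n],
        (forall P, P \in Pt -> [/\ L P \subset P, R P \subset P & [disjoint L P & R P]]) &
        H = \bigcup_(P in Pt) block_edges G P (L P) (R P)].
Proof.
move=> dagG trG HG pcH [w [wf adm]].
have loop_ok a b : (a, b) \in G -> (a, b) \notin H -> conn H a b -> (-1 < w a - w b)%R.
  move=> aG aH c; have := adm [:: (a, b)].
  rewrite big_seq1 /=; apply.
  rewrite /comp_cycle /= !inE aH aG /=.
  by rewrite !andbT conn_sym.
have wle1 x : (w x <= 1)%R.
  have [us [_ Ex]] := wf x.
  have w0 : w us = 0%R.
    have := wstep dagG HG pcH wf Ex; lia.
  move: Ex => [p [/andP[Pp _] <- _]].
  suff : forall z, (w z = 0 \/ (w z = 1 /\ exists x0, (x0, z) \in H /\ w x0 = 0))%R ->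
     path (Hun H) z p -> (w (last z p) <= 1)%R.
    by apply; [left|].
  elim: p {Pp} => [|y p IH] z /=.
    by move=> [->|[-> _]].
  move=> Iz /andP[e Pp]; apply: IH Pp.
  move: e; rewrite /Hun => /orP[] e.
    have ey := w_edge dagG HG pcH wf e.
    case: Iz => [z0|[z1 [x0 [x0z x00]]]].
      by right; split; [lia| exists z; split].
    exfalso.
    have xyG : (x0, y) \in G by apply: (trG _ z); apply: (subsetP HG).
    have [xyH|xyH] := boolP ((x0, y) \in H).
      have := w_edge dagG HG pcH wf xyH; lia.
    have c : conn H x0 y.
      apply: (ellR_conn (ellR_comp dagG HG pcH (ellR_edge dagG HG x0z) (ellR_edge dagG HG e))).
    have := loop_ok _ _ xyG xyH c; lia.
  have ez := w_edge dagG HG pcH wf e.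
  have := w_ge0 dagG HG pcH wf y.
  case: Iz => [z0|[z1 _]]; first lia.
  by move=> _; left; lia.
have wH a b : (a, b) \in H -> w a = 0%R /\ w b = 1%R.
  move=> ab; have := w_edge dagG HG pcH wf ab.
  have := w_ge0 dagG HG pcH wf a; have := wle1 b; lia.
have eqi : {in [set: 'I_n] & &, equivalence_rel (conn H)}.
  move=> x y z _ _ _; split; first exact: connect0.
  move=> cxy; apply/idP/idP => c.
    by rewrite conn_sym in cxy; apply: connect_trans cxy c.
  by apply: connect_trans cxy c.
set Pt := equivalence_partition (conn H) [set: 'I_n].
have partP := equivalence_partitionP eqi.
have pbE := pblock_equivalence_partition eqi.
have [/eqP covP tiP _] := and3P partP.
exists Pt, (fun P : {set 'I_n} => [set x in P | w x == 0%R]), (fun P : {set 'I_n} => [set x in P | w x == 1%R]).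
split => //.
  move=> P _; split.
  - by apply/subsetP => x; rewrite inE => /andP[].
  - by apply/subsetP => x; rewrite inE => /andP[].
  - by apply/pred0P => x /=; rewrite !inE; case: eqP => [->|]; rewrite ?andbF.
apply/setP => -[a b]; apply/idP/idP.
  move=> ab; have [wa wb] := wH _ _ ab.
  have acov : a \in cover Pt by rewrite covP.
  apply/bigcupP; exists (pblock Pt a); first exact: pblock_mem.
  rewrite !inE /= (subsetP HG _ ab) mem_pblock acov pbE ?inE //.
  rewrite wa wb !eqxx !andbT /=.
  by rewrite andbb; apply: connect1; rewrite /Hun ab.
case/bigcupP => P PP; rewrite !inE /= => /and5P[aG aP bP /andP[_ /eqP wa] /andP[_ /eqP wb]].
apply/negPn/negP => abH.
have c : conn H a b.
  rewrite -pbE ?inE // (def_pblock tiP PP aP) //.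
have := loop_ok _ _ aG abH c; rewrite wa wb; lia.
Qed.
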